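(* Let $(q_k,p_{k1},p_{k2})_{k\ge2}$ be real numbers with $q_k>0$, $p_{k1}\ge0$, $p_{k2}>0$ and $q_k+p_{k1}+p_{k2}=1$ for all $k\ge2$. Suppose that $a_k\to a>0$ and $b_k\to b>0$ as $k\to\infty$ and that $\varrho_k$ is monotone in $k\ge N_0$ for some $N_0$. Then both $D_X(n)$ and $D_Y(n)$ are monotone in $n>N_0$, and there exist constants $0<c_7<c_8<\infty$ such that for all $n>m\ge1$, $$c_7D_X(m)\le F_X(m)\le c_8D_X(m),\quad c_7D_Y(m)\le F_Y(m)\le c_8D_Y(m),\quad c_7D_Y(m,n)\le F_Y(m,n)\le c_8D_Y(m,n).$$
   Context: For $k\ge2$, $a_k=(p_{k1}+p_{k2})/q_k$, $b_k=p_{k2}/q_k$, $A_k=\begin{pmatrix}a_k&b_k\\1&0\end{pmatrix}$, $\varrho_k=\frac{a_k+\sqrt{a_k^2+4b_k}}{2}$; $\mathbf e_1=(1,0)$, $^t$ is transpose, empty products are the identity. $D_X(n)=1+\sum_{j=n+1}^\infty\prod_{i=n+1}^j\varrho_i$, $D_Y(n)=1+\sum_{j=n+1}^\infty\prod_{i=n+1}^j\varrho_i^{-1}$, and for $1\le m<n$, $D_Y(m,n)=1+\sum_{j=m+1}^{n-1}\prod_{i=m+1}^j\varrho_i^{-1}$. For $n>m\ge1$, $F_X(m,n)=1+\sum_{s=m+1}^{n-1}\mathbf e_1A_s\cdots A_{m+1}\mathbf e_1^t$ and $F_X(m)=\lim_{n\to\infty}F_X(m,n)$. For $2\le k\le n$,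 $\zeta_{k,n}=\frac{\mathbf e_1A_{k+1}\cdots A_n\mathbf e_1^t}{\mathbf e_1A_k\cdots A_n\mathbf e_1^t}$ and $\zeta_k=\lim_{n\to\infty}\zeta_{k,n}$ (which exists under the hypotheses); $F_Y(m,n)=1+\sum_{j=m+1}^{n-1}\prod_{i=m+1}^j\zeta_i$ and $F_Y(m)=\lim_{n\to\infty}F_Y(m,n)$. All these limits are monotone limits in $[1,\infty]$. *)

(* Defs.v *)
From HB Require Import structures.
From mathcomp Require Import all_boot all_order all_algebra.
From mathcomp Require Import all_classical all_reals all_analysis.

Set Implicit Arguments.
Unset Strict Implicit.
Unset Printing Implicit Defensive.

Import Order.TTheory GRing.Theory Num.Theory.
Import numFieldNormedType.Exports.
Local Open Scope ring_scope.

(* Sequences q, p1, p2 : nat -> R; only indices k >= 2 are meaningful. *)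

Definition ak (R : realType) (q p1 p2 : nat -> R) (k : nat) : R :=
  (p1 k + p2 k) / q k.

Definition bk (R : realType) (q p1 p2 : nat -> R) (k : nat) : R :=
  p2 k / q k.

(* A_k = [[a_k, b_k], [1, 0]] *)
Definition Amat (R : realType) (q p1 p2 : nat -> R) (k : nat) : 'M[R]_2 :=
  \matrix_(i < 2, j < 2)
    (if nat_of_ord i == 0%N then (if nat_of_ord j == 0%N then ak q p1 p2 k else bk q p1 p2 k)
     else (if nat_of_ord j == 0%N then 1 else 0)).

Definition rho (R : realType) (q p1 p2 : nat -> R) (k : nat) : R :=
  (ak q p1 p2 k + Num.sqrt (ak q p1 p2 k ^+ 2 + 4 * bk q p1 p2 k)) / 2.

Definition DX (R : realType) (q p1 p2 : nat -> R) (n : nat) : \bar R :=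
  (1 + \sum_(n.+1 <= j <oo) (\prod_(n.+1 <= i < j.+1) rho q p1 p2 i)%:E)%E.

Definition DY (R : realType) (q p1 p2 : nat -> R) (n : nat) : \bar R :=
  (1 + \sum_(n.+1 <= j <oo) (\prod_(n.+1 <= i < j.+1) (rho q p1 p2 i)^-1)%:E)%E.

Definition DYmn (R : realType) (q p1 p2 : nat -> R) (m n : nat) : R :=
  1 + \sum_(m.+1 <= j < n) \prod_(m.+1 <= i < j.+1) (rho q p1 p2 i)^-1.

Definition prodA_desc (R : realType) (q p1 p2 : nat -> R) (m s : nat) : 'M[R]_2 :=
  \prod_(i <- rev (index_iota m.+1 s.+1)) Amat q p1 p2 i.

Definition prodA_asc (R : realType) (q p1 p2 : nat -> R) (k n : nat) : 'M[R]_2 :=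
  \prod_(k <= i < n.+1) Amat q p1 p2 i.

Definition FXmn (R : realType) (q p1 p2 : nat -> R) (m n : nat) : R :=
  1 + \sum_(m.+1 <= s < n) prodA_desc q p1 p2 m s ord0 ord0.

Definition FX (R : realType) (q p1 p2 : nat -> R) (m : nat) : \bar R :=
  limn (fun n => (FXmn q p1 p2 m n)%:E).

Definition zetakn (R : realType) (q p1 p2 : nat -> R) (k n : nat) : R :=
  prodA_asc q p1 p2 k.+1 n ord0 ord0 / prodA_asc q p1 p2 k n ord0 ord0.

Definition zeta (R : realType) (q p1 p2 : nat -> R) (k : nat) : R :=
  limn (zetakn q p1 p2 k).

Definition FYmn (R : realType) (q p1 p2 : nat -> R) (m n : nat) : R :=
  1 + \sum_(m.+1 <= j < n) \prod_(m.+1 <= i < j.+1) zeta q p1 p2 i.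

Definition FY (R : realType) (q p1 p2 : nat -> R) (m : nat) : \bar R :=
  limn (fun n => (FYmn q p1 p2 m n)%:E).

(* Main.v *)
Require Import Defs.
From HB Require Import structures.
From mathcomp Require Import all_boot all_order all_algebra.
From mathcomp Require Import all_classical all_reals all_analysis.
From mathcomp Require Import ring lra zify.
Set Implicit Arguments.
Unset Strict Implicit.
Unset Printing Implicit Defensive.
Import Order.TTheory GRing.Theory Num.Theory.
Import numFieldNormedType.Exports.
Local Open Scope classical_set_scope.
Local Open Scope ring_scope.

Section Contr.
Variable R : realType.

Lemma ln_concave1 (c t : R) : 0 <= c -> c <= 1 -> 0 < t ->
  c * ln t <= ln (c * t + (1 - c)).
Proof.
move=> c0 c1 t0.
have := @concave_ln R (Itv01 c0 c1) t 1 t0 ltr01.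
by rewrite !convRE /= ln1 mulr0 addr0 mulr1.
Qed.

Lemma contr (A0 B1 al be r r' : R) : 0 < A0 -> A0 <= al -> 0 < be -> be <= B1 ->
  A0 <= r -> A0 <= r' ->
  `|ln (al + be / r) - ln (al + be / r')| <= B1 / (A0 * A0 + B1) * `|ln r - ln r'|.
Proof.
move=> A00 Aal be0 beB.
wlog rr : r r' / r' <= r.
  move=> H Ar Ar'; have [/H|/ltW/H] := leP r' r; first exact.
  by move=> /(_ Ar' Ar); rewrite distrC (distrC (ln r)).
move=> Ar Ar'.
have r0 : 0 < r by apply: lt_le_trans Ar.
have r'0 : 0 < r' by apply: lt_le_trans Ar'.
have al0 : 0 < al by apply: lt_le_trans Aal.
have h0 : forall x, 0 < x -> 0 < al + be / x.
  by move=> x x0; rewrite addr_gt0 // divr_gt0.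
have B10 : 0 < B1 by apply: lt_le_trans beB.
set t := r / r'.
have t0 : 0 < t by rewrite divr_gt0.
set c := al * r' / (al * r' + be).
have D0 : 0 < al * r' + be by rewrite addr_gt0 // mulr_gt0.
have c0 : 0 <= c by rewrite divr_ge0 // ?mulr_ge0 // ltW.
have c1 : c <= 1 by rewrite ler_pdivrMr // mul1r lerDl ltW.
have ratio : (al + be / r') / (al + be / r) = t / (c * t + (1 - c)).
  rewrite /t /c; field.
  have p1 : 0 < al * r by rewrite mulr_gt0.
  have p2 : 0 < al * r' by rewrite mulr_gt0.
  by apply/and4P; split; rewrite gt_eqF //; lra.
have lnt : ln r - ln r' = ln t by rewrite /t ln_div // posrE.
have lnt0 : 0 <= ln t by rewrite -lnt subr_ge0 ler_ln // posrE.
have hle : al + be / r <= al + be / r'.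
  by rewrite lerD2l ler_pM2l // lef_pV2 // posrE.
rewrite distrC ger0_norm; last by rewrite subr_ge0 ler_ln // posrE h0.
rewrite lnt ger0_norm //.
rewrite -ln_div ?posrE ?h0 // ratio ln_div ?posrE //; last first.
  have ct0 : 0 < c * t by rewrite mulr_gt0 // divr_gt0 // mulr_gt0.
  lra.
have hc := @ln_concave1 c t c0 c1 t0.
have cc0 : A0 * A0 / (A0 * A0 + B1) <= c.
  have E0 : 0 < A0 * A0 + B1 by rewrite addr_gt0 // mulr_gt0.
  have -> : c = A0 * A0 / (A0 * A0 + B1) +
     (al * r' * B1 - A0 * A0 * be) / ((al * r' + be) * (A0 * A0 + B1)).
    by rewrite /c; field; rewrite !gt_eqF.
  rewrite lerDl; apply: divr_ge0; last by rewrite ltW // mulr_gt0.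
  have h1 : A0 * A0 <= al * r' by rewrite ler_pM // ltW.
  have h2 : A0 * A0 * be <= A0 * A0 * B1 by rewrite ler_wpM2l // mulr_ge0 // ltW.
  have h3 : A0 * A0 * B1 <= al * r' * B1 by rewrite ler_wpM2r // ltW.
  lra.
have -> : B1 / (A0 * A0 + B1) = 1 - A0 * A0 / (A0 * A0 + B1).
  by field; rewrite lt0r_neq0 // addr_gt0 // mulr_gt0.
have := ler_wpM2r lnt0 cc0; lra.
Qed.
Lemma sum_contract (e w : nat -> R) (lam E0 : R) (N : nat) :
  0 <= lam -> lam < 1 -> (forall j, (j <= N)%N -> 0 <= e j) -> e 0%N <= E0 ->
  (forall j, (j < N)%N -> e j.+1 <= lam * e j + (w j.+1 - w j)) ->
  \sum_(0 <= j < N.+1) e j <= (E0 + (w N - w 0%N)) / (1 - lam).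
Proof.
move=> l0 l1 e0 eE he.
set S := \sum_(0 <= j < N.+1) e j.
have S1 : S = e 0%N + \sum_(0 <= j < N) e j.+1 by rewrite /S big_nat_recl.
have S2 : \sum_(0 <= j < N) e j <= S.
  rewrite /S big_nat_recr //= lerDl; exact: e0.
have S3 : \sum_(0 <= j < N) e j.+1 <= lam * \sum_(0 <= j < N) e j + (w N - w 0%N).
  rewrite -telescope_sumr // mulr_sumr -big_split /=.
  by apply: ler_sum_nat => j /andP[_ jN]; apply: he.
have S4 : lam * \sum_(0 <= j < N) e j <= lam * S by apply: ler_wpM2l.
rewrite ler_pdivlMr ?subr_gt0 //.
have : S <= E0 + lam * S + (w N - w 0%N) by lra.
lra.
Qed.
End Contr.

Section Bnd.
Variable R : realType.

Lemma ext_lb (f : nat -> R) (c : R) (K : nat) : 0 < c ->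
  (forall k, (K <= k)%N -> c <= f k) -> (forall k, (2 <= k)%N -> 0 < f k) ->
  exists c', 0 < c' /\ forall k, (2 <= k)%N -> c' <= f k.
Proof.
elim: K c => [|K IH] c c0 hK hpos.
  by exists c; split => // k _; apply: hK.
case: (leqP 2 K) => K2.
  apply: (IH (Num.min c (f K))).
  - by rewrite lt_min c0 hpos.
  - move=> k; rewrite leq_eqVlt => /orP[/eqP <-|Kk]; first by rewrite ge_min lexx orbT.
    by rewrite ge_min hK.
  - exact: hpos.
by exists c; split => // k k2; apply: hK; lia.
Qed.

Lemma ext_ub (f : nat -> R) (C : R) (K : nat) :
  (forall k, (K <= k)%N -> f k <= C) -> exists C', forall k, f k <= C'.
Proof.
elim: K C => [|K IH] C hK; first by exists C => k; apply: hK.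
apply: (IH (Num.max C (f K))) => k; rewrite leq_eqVlt => /orP[/eqP <-|Kk].
  by rewrite le_max lexx orbT.
by rewrite le_max hK.
Qed.

Lemma cvg_lb (f : nat -> R) (l : R) : 0 < l -> f @ \oo --> l ->
  (forall k, (2 <= k)%N -> 0 < f k) ->
  exists c, 0 < c /\ forall k, (2 <= k)%N -> c <= f k.
Proof.
move=> l0 fl hpos.
have [N _ HN] : \forall n \near \oo, l / 2 < f n.
  by apply: (cvgr_gt l fl); rewrite ltr_pdivrMr // ltr_pMr // ltr1n.
by apply: (@ext_lb f (l / 2) N) => // [|k /HN/ltW //]; rewrite divr_gt0.
Qed.

Lemma cvg_ub (f : nat -> R) (l : R) : f @ \oo --> l -> exists C, forall k, f k <= C.
Proof.
move=> fl.
have [N _ HN] : \forall n \near \oo, f n < l + 1.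
  by apply: (cvgr_lt l fl); rewrite ltrDl.
by apply: (@ext_ub f (l + 1) N) => k /HN/ltW.
Qed.
End Bnd.

Section Main.
Variable R : realType.
Variables q p1 p2 : nat -> R.
Hypothesis hq : forall k, (2 <= k)%N -> 0 < q k.
Hypothesis hp1 : forall k, (2 <= k)%N -> 0 <= p1 k.
Hypothesis hp2 : forall k, (2 <= k)%N -> 0 < p2 k.
Local Notation a := (ak q p1 p2).
Local Notation b := (bk q p1 p2).
Local Notation rh := (rho q p1 p2).

Lemma a_gt0 k : (2 <= k)%N -> 0 < a k.
Proof. by move=> k2; rewrite /ak divr_gt0 ?hq // ltr_wpDl ?hp1 ?hp2. Qed.
Lemma b_gt0 k : (2 <= k)%N -> 0 < b k.
Proof. by move=> k2; rewrite /bk divr_gt0 ?hq ?hp2. Qed.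

Lemma rho_gt0 k : (2 <= k)%N -> 0 < rh k.
Proof.
move=> k2; rewrite /rho divr_gt0 // addr_gt0 ?a_gt0 // sqrtr_gt0.
have := b_gt0 k2; have := sqr_ge0 (a k); lra.
Qed.

Lemma rho_sq k : (2 <= k)%N -> rh k * rh k = a k * rh k + b k.
Proof.
move=> k2; rewrite /rho.
have h : 0 <= a k ^+ 2 + 4 * b k by rewrite addr_ge0 ?sqr_ge0 // mulr_ge0 // ltW // b_gt0.
have := sqr_sqrtr h; set s := Num.sqrt _ => hs.
rewrite -[b k](_ : (s ^+ 2 - a k ^+ 2) / 4 = b k); last by rewrite hs; field.
by field.
Qed.

Lemma rho_ge_a k : (2 <= k)%N -> a k <= rh k.
Proof.
move=> k2; have := rho_sq k2; have := rho_gt0 k2; have := b_gt0 k2; nra.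
Qed.

Lemma rho_fix k : (2 <= k)%N -> rh k = a k + b k / rh k.
Proof.
move=> k2; have r0 := rho_gt0 k2.
apply: (mulIf (lt0r_neq0 r0)); rewrite mulrDl divfK ?lt0r_neq0 //; exact: rho_sq.
Qed.


Lemma tri (x y z : R) : `|x - z| <= `|x - y| + `|y - z|.
Proof. by rewrite (_ : x - z = (x - y) + (y - z)) ?ler_normD //; ring. Qed.

Variables (A0 A1 B1 : R).
Hypothesis hA0 : 0 < A0.
Hypothesis haA0 : forall k, (2 <= k)%N -> A0 <= a k.
Hypothesis haA1 : forall k, (2 <= k)%N -> a k <= A1.
Hypothesis hbB1 : forall k, (2 <= k)%N -> b k <= B1.

Definition Rmax := A1 + B1 / A0.
Definition lam := B1 / (A0 * A0 + B1).
Definition E1 := ln Rmax - ln A0.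

Lemma B1_gt0 : 0 < B1.
Proof. exact: lt_le_trans (b_gt0 (leqnn 2)) (hbB1 (leqnn 2)). Qed.

Lemma step_in k x : (2 <= k)%N -> A0 <= x -> A0 <= a k + b k / x <= Rmax.
Proof.
move=> k2 Ax; have x0 : 0 < x by apply: lt_le_trans Ax.
have bx : 0 <= b k / x by rewrite divr_ge0 // ltW // b_gt0.
have h1 := haA0 k2; have h2 := haA1 k2.
have h3 : b k / x <= B1 / A0.
  apply: (@le_trans _ _ (B1 / x)); first by apply: ler_wpM2r; [rewrite invr_ge0 ltW | apply: hbB1].
  by apply: ler_wpM2l; [apply: ltW; apply: B1_gt0 | rewrite lef_pV2 ?posrE].
rewrite /Rmax; apply/andP; split; lra.
Qed.

Lemma rho_in k : (2 <= k)%N -> A0 <= rh k <= Rmax.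
Proof.
move=> k2; have := step_in k2 (le_trans (haA0 k2) (rho_ge_a k2)).
by rewrite -rho_fix.
Qed.

Lemma A0_le_Rmax : A0 <= Rmax.
Proof. by case/andP: (rho_in (leqnn 2)) => h1 h2; apply: le_trans h2. Qed.

Lemma Rmax_gt0 : 0 < Rmax.
Proof. exact: lt_le_trans hA0 A0_le_Rmax. Qed.

Lemma lam_ge0 : 0 <= lam.
Proof. by rewrite divr_ge0 // ltW // ?addr_gt0 ?mulr_gt0 ?B1_gt0. Qed.

Lemma lam_lt1 : lam < 1.
Proof.
have := B1_gt0; have : 0 < A0 * A0 by rewrite mulr_gt0.
move=> h1 h2; rewrite /lam ltr_pdivrMr ?addr_gt0 //; lra.
Qed.

Lemma E1_ge0 : 0 <= E1.
Proof. by rewrite /E1 subr_ge0 ler_ln ?posrE ?Rmax_gt0 // A0_le_Rmax. Qed.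

Lemma lnd_le x y : A0 <= x <= Rmax -> A0 <= y <= Rmax -> `|ln x - ln y| <= E1.
Proof.
move=> /andP[x1 x2] /andP[y1 y2].
have x0 : 0 < x by apply: lt_le_trans x1.
have y0 : 0 < y by apply: lt_le_trans y1.
have := Rmax_gt0 => R0.
have lx1 : ln A0 <= ln x by rewrite ler_ln ?posrE.
have lx2 : ln x <= ln Rmax by rewrite ler_ln ?posrE.
have ly1 : ln A0 <= ln y by rewrite ler_ln ?posrE.
have ly2 : ln y <= ln Rmax by rewrite ler_ln ?posrE.
rewrite /E1 ler_norml; apply/andP; split; lra.
Qed.

Fixpoint rf (m j : nat) : R :=
  if j is j'.+1 then a (m.+1 + j) + b (m.+1 + j) / rf m j' else a m.+1.

Fixpoint rb (n d : nat) : R :=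
  if d is d'.+1 then a (n - d) + b (n - d) / rb n d' else a n.

Lemma rf_in m j : (1 <= m)%N -> A0 <= rf m j <= Rmax.
Proof.
move=> m1; elim: j => [|j IH] /=.
  by rewrite haA0 ?ltnS // andTb (le_trans (haA1 _)) // ?ltnS // /Rmax lerDl divr_ge0 ?ltW ?B1_gt0.
by apply: step_in; [lia | case/andP: IH].
Qed.

Lemma rb_in n d : (d + 2 <= n)%N -> A0 <= rb n d <= Rmax.
Proof.
elim: d => [|d IH] /= h.
  by rewrite haA0 ?andTb ?(le_trans (haA1 _)) // ?/Rmax ?lerDl ?divr_ge0 ?ltW ?B1_gt0 //; lia.
by apply: step_in; [lia | case/andP: (IH ltac:(lia))].
Qed.

Variables (sg : R) (N0 : nat).
Hypothesis hsg : sg = 1 \/ sg = -1.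
Hypothesis hmon : forall k l, (2 <= k)%N -> (N0 <= k)%N -> (k <= l)%N ->
  sg * ln (rh k) <= sg * ln (rh l).

Definition N1 := maxn N0 2.
Definition psi (k : nat) : R := sg * ln (rh (maxn k N1)) + E1 * (minn k N1)%:R.
Definition Wc := E1 * (N1.+1)%:R.
Definition Sc := (E1 + Wc) / (1 - lam).

Lemma sg_norm x : `|sg * x| = `|x|.
Proof. by case: hsg => ->; rewrite ?mul1r ?mulN1r ?normrN. Qed.

Lemma psi_step k : (2 <= k)%N -> `|ln (rh k.+1) - ln (rh k)| <= psi k.+1 - psi k.
Proof.
move=> k2; rewrite /psi.
case: (leqP N1 k) => kN.
  try (have -> : maxn k.+1 N1 = k.+1 by lia).
  try (have -> : maxn k N1 = k by lia).
  try (have -> : minn k.+1 N1 = N1 by lia).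
  try (have -> : minn k N1 = N1 by lia).
  have h := hmon (k:=k) (l:=k.+1) k2 ltac:(rewrite /N1 in kN; lia) (leqnSn k).
  rewrite -(sg_norm (ln (rh k.+1) - ln (rh k))) ger0_norm; last by rewrite mulrBr subr_ge0.
  rewrite mulrBr; lra.
try (have -> : maxn k.+1 N1 = N1 by lia).
try (have -> : maxn k N1 = N1 by lia).
try (have -> : minn k.+1 N1 = k.+1 by lia).
try (have -> : minn k N1 = k by lia).
rewrite -natr1 mulrDr mulr1.
have := lnd_le (rho_in (ltnW k2 : (2 <= k.+1)%N)) (rho_in k2).
by [] || (move=> h; lra).
Qed.

Lemma psi_diff x y : (2 <= x)%N -> (2 <= y)%N -> psi y - psi x <= Wc.
Proof.
move=> x2 y2; rewrite /psi /Wc.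
have h1 : sg * ln (rh (maxn y N1)) - sg * ln (rh (maxn x N1)) <= E1.
  rewrite -mulrBr; apply: le_trans (ler_norm _) _; rewrite sg_norm.
  by apply: lnd_le; apply: rho_in; lia.
have h2 : E1 * (minn y N1)%:R <= E1 * N1%:R.
  by rewrite ler_wpM2l ?E1_ge0 // ler_nat; lia.
have h3 : 0 <= E1 * (minn x N1)%:R by rewrite mulr_ge0 ?E1_ge0.
rewrite -natr1 mulrDr mulr1; lra.
Qed.

Lemma Sc_ge0 : 0 <= Sc.
Proof.
rewrite /Sc /Wc; apply: divr_ge0; last by rewrite subr_ge0 ltW // lam_lt1.
by rewrite addr_ge0 ?E1_ge0 // mulr_ge0 ?E1_ge0.
Qed.

Lemma fwd_err m N : (1 <= m)%N ->
  \sum_(0 <= j < N.+1) `|ln (rf m j) - ln (rh (m.+1 + j))| <= Sc.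
Proof.
move=> m1.
apply: le_trans (@sum_contract R (fun j => `|ln (rf m j) - ln (rh (m.+1 + j))|)
   (fun j => psi (m.+1 + j)) lam E1 N lam_ge0 lam_lt1 _ _ _) _.
- by move=> j _.
- by rewrite addn0; apply: lnd_le; [apply: rf_in | apply: rho_in; lia].
- move=> j jN /=.
  have i2 : (2 <= m.+1 + j.+1)%N by lia.
  rewrite [X in _ - ln X](rho_fix i2).
  apply: le_trans (contr hA0 (haA0 i2) (b_gt0 i2) (hbB1 i2) _ _) _.
  + by case/andP: (rf_in j m1).
  + by case/andP: (rho_in i2).
  have hs := psi_step (k:=m.+1 + j) ltac:(lia).
  rewrite -addnS in hs.
  have hn : `|ln (rf m j) - ln (rh (m.+1 + j.+1))| <=
      `|ln (rf m j) - ln (rh (m.+1 + j))| + `|ln (rh (m.+1 + j.+1)) - ln (rh (m.+1 + j))|.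
    by rewrite [X in _ <= _ + X]distrC tri.
  have := lam_ge0; have := lam_lt1; have := normr_ge0 (ln (rh (m.+1 + j.+1)) - ln (rh (m.+1 + j))).
  have := ler_wpM2l lam_ge0 hn; rewrite -/lam; nra.
- rewrite /Sc ler_wpM2r ?invr_ge0 ?subr_ge0 ?(ltW lam_lt1) // lerD2l.
  by apply: psi_diff; lia.
Qed.

Lemma bwd_err n N : (N + 2 <= n)%N ->
  \sum_(0 <= d < N.+1) `|ln (rb n d) - ln (rh (n - d))| <= Sc.
Proof.
move=> Nn.
apply: le_trans (@sum_contract R (fun d => `|ln (rb n d) - ln (rh (n - d))|)
   (fun d => - psi (n - d)) lam E1 N lam_ge0 lam_lt1 _ _ _) _.
- by move=> j _.
- by rewrite subn0; apply: lnd_le; [apply: rb_in; lia | apply: rho_in; lia].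
- move=> d dN /=.
  have i2 : (2 <= n - d.+1)%N by lia.
  rewrite [X in _ - ln X](rho_fix i2).
  apply: le_trans (contr hA0 (haA0 i2) (b_gt0 i2) (hbB1 i2) _ _) _.
  + by case/andP: (rb_in (n:=n) (d:=d) ltac:(lia)).
  + by case/andP: (rho_in i2).
  have hs := psi_step i2.
  rewrite (_ : (n - d.+1).+1 = (n - d)%N) in hs; last by lia.
  have hn : `|ln (rb n d) - ln (rh (n - d.+1))| <=
      `|ln (rb n d) - ln (rh (n - d))| + `|ln (rh (n - d)) - ln (rh (n - d.+1))|.
    by rewrite tri.
  have := lam_ge0; have := lam_lt1; have := normr_ge0 (ln (rh (n - d)) - ln (rh (n - d.+1))).
  have := ler_wpM2l lam_ge0 hn; rewrite -/lam; nra.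
- rewrite /Sc ler_wpM2r ?invr_ge0 ?subr_ge0 ?(ltW lam_lt1) // lerD2l opprK subn0 addrC.
  by apply: psi_diff; lia.
Qed.

Lemma rev_iotaS m s : (m <= s)%N ->
  rev (index_iota m.+1 s.+2) = s.+1 :: rev (index_iota m.+1 s.+1).
Proof.
move=> ms; rewrite /index_iota.
have -> : (s.+2 - m.+1 = (s.+1 - m.+1) + 1)%N by lia.
by rewrite iotaD rev_cat /=; congr (_ :: _); lia.
Qed.

Local Notation Am := (Amat q p1 p2).
Local Notation Pd := (prodA_desc q p1 p2).
Local Notation Pa := (prodA_asc q p1 p2).

Lemma Pd_S m s : (m <= s)%N -> Pd m s.+1 = Am s.+1 * Pd m s.
Proof. by move=> ms; rewrite /prodA_desc rev_iotaS // big_cons. Qed.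

Lemma Pd_0 m : Pd m m = 1.
Proof. by rewrite /prodA_desc /index_iota subnn big_nil. Qed.

Lemma Pa_S k n : (k <= n)%N -> Pa k n = Am k * Pa k.+1 n.
Proof. by move=> kn; rewrite /prodA_asc big_nat_recl // big_add1. Qed.

Lemma Pa_0 n : Pa n.+1 n = 1.
Proof. by rewrite /prodA_asc big_geq. Qed.

Lemma AM00 k (M : 'M[R]_2) : (Am k * M) ord0 ord0 = a k * M ord0 ord0 + b k * M 1 ord0.
Proof.
rewrite -mulmxE mxE big_ord_recl big_ord1 !mxE /=.
by congr (_ + _ * M _ _); apply/val_inj.
Qed.

Lemma AM10 k (M : 'M[R]_2) : (Am k * M) 1 ord0 = M ord0 ord0.
Proof.
by rewrite -mulmxE mxE big_ord_recl big_ord1 !mxE /= mul1r mul0r addr0.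
Qed.

Lemma one00 : (1 : 'M[R]_2) ord0 ord0 = 1.
Proof. by rewrite !mxE. Qed.
Lemma one10 : (1 : 'M[R]_2) 1 ord0 = 0.
Proof. by rewrite !mxE. Qed.

Lemma rf_gt0 m j : (1 <= m)%N -> 0 < rf m j.
Proof. by move=> m1; case/andP: (rf_in j m1) => h _; apply: lt_le_trans h. Qed.

Lemma rb_gt0 n d : (d + 2 <= n)%N -> 0 < rb n d.
Proof. by move=> h; case/andP: (rb_in h) => h1 _; apply: lt_le_trans h1. Qed.

Lemma fwd_prod m j : (1 <= m)%N ->
  Pd m (m + j) ord0 ord0 = \prod_(0 <= i < j) rf m i /\
  Pd m (m + j) 1 ord0 = (if j is j'.+1 then \prod_(0 <= i < j') rf m i else 0).
Proof.
move=> m1; elim: j => [|j [IH1 IH2]].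
  by rewrite addn0 Pd_0 one00 one10 big_geq.
rewrite addnS Pd_S ?leq_addr // AM00 AM10 IH1 IH2; split => //.
case: j IH1 IH2 => [|j] IH1 IH2.
  by rewrite big_geq // big_nat1 mulr1 mulr0 addr0 addn0.
rewrite big_nat_recr //= big_nat_recr //=.
have r0 := rf_gt0 j m1.
rewrite (_ : (m + j.+1).+1 = (m.+1 + j.+1)%N); last by lia.
rewrite [in RHS]big_nat_recr //=.
set P := \prod_(0 <= i < j) rf m i.
by field; rewrite lt0r_neq0.
Qed.

Lemma bwd_prod n d : (d + 2 <= n)%N ->
  [/\ Pa (n - d) n ord0 ord0 = rb n d * Pa (n - d).+1 n ord0 ord0,
      Pa (n - d) n 1 ord0 = Pa (n - d).+1 n ord0 ord0 &
      0 < Pa (n - d).+1 n ord0 ord0].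
Proof.
elim: d => [|d IH] h.
  rewrite subn0 Pa_S // AM00 AM10 Pa_0 one00 one10 mulr0 addr0 mulr1 /=.
  by split => //; rewrite ltr01.
have [IH1 IH2 IH3] := IH ltac:(lia).
have e : (n - d.+1).+1 = (n - d)%N by lia.
rewrite Pa_S; last by lia.
rewrite e AM00 AM10 IH1 IH2 /=.
have r0 := rb_gt0 (n:=n) (d:=d) ltac:(lia).
split => //; last by rewrite mulr_gt0.
by field; rewrite lt0r_neq0.
Qed.

Lemma Pa_gt0 k n : (2 <= k)%N -> (k <= n.+1)%N -> 0 < Pa k n ord0 ord0.
Proof.
move=> k2 kn; case: (ltnP n k) => nk.
  by rewrite (_ : k = n.+1) ?Pa_0 ?one00 ?ltr01 //; lia.
have [h1 _ h3] := bwd_prod (n:=n) (d:=n - k) ltac:(lia).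
rewrite (_ : (n - (n - k))%N = k) in h1 h3; last by lia.
by rewrite h1 mulr_gt0 // rb_gt0 //; lia.
Qed.

Lemma zetakn_eq k n : (2 <= k)%N -> (k <= n)%N -> zetakn q p1 p2 k n = (rb n (n - k))^-1.
Proof.
move=> k2 kn; rewrite /zetakn.
have [h1 _ h3] := bwd_prod (n:=n) (d:=n - k) ltac:(lia).
rewrite (_ : (n - (n - k))%N = k) in h1 h3; last by lia.
rewrite h1; have := rb_gt0 (n:=n) (d:=n-k) ltac:(lia).
by move=> r0; field; rewrite !lt0r_neq0.
Qed.

Lemma prod_cmp (x y : nat -> R) (n0 n1 : nat) (S : R) :
  (forall j, (n0 <= j < n1)%N -> 0 < x j /\ 0 < y j) ->
  \sum_(n0 <= j < n1) `|ln (x j) - ln (y j)| <= S ->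
  expR (- S) * \prod_(n0 <= j < n1) y j <= \prod_(n0 <= j < n1) x j /\
  \prod_(n0 <= j < n1) x j <= expR S * \prod_(n0 <= j < n1) y j.
Proof.
move=> pos hS.
have ex : \prod_(n0 <= j < n1) x j = expR (\sum_(n0 <= j < n1) ln (x j)).
  rewrite expR_sum; apply: eq_big_nat => j /pos [h _]; by rewrite lnK ?posrE.
have ey : \prod_(n0 <= j < n1) y j = expR (\sum_(n0 <= j < n1) ln (y j)).
  rewrite expR_sum; apply: eq_big_nat => j /pos [_ h]; by rewrite lnK ?posrE.
set D := \sum_(n0 <= j < n1) (ln (x j) - ln (y j)).
have hD : `|D| <= S by apply: le_trans (ler_norm_sum _ _ _) hS.
have exy : \prod_(n0 <= j < n1) x j = expR D * \prod_(n0 <= j < n1) y j.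
  by rewrite ex ey -expRD /D sumrB subrK.
rewrite exy; move: hD; rewrite ler_norml => /andP[h1 h2].
have yp : 0 <= \prod_(n0 <= j < n1) y j.
  by rewrite big_seq_cond; apply: prodr_ge0 => j /andP[]; rewrite mem_index_iota => /pos[_ /ltW].
split; apply: ler_wpM2r => //; rewrite ler_expR //.
Qed.

Lemma sub_sum (f : nat -> R) n0 m0 m1 n1 : (n0 <= m0)%N -> (m0 <= m1)%N -> (m1 <= n1)%N ->
  (forall i, 0 <= f i) ->
  \sum_(m0 <= i < m1) f i <= \sum_(n0 <= i < n1) f i.
Proof.
move=> h1 h2 h3 f0.
rewrite (@big_cat_nat _ _ _ m0 n0 n1) ?(leq_trans h2 h3) //= (@big_cat_nat _ _ _ m1 m0 n1) //=.
have s1 : 0 <= \sum_(n0 <= i < m0) f i by apply: sumr_ge0.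
have s2 : 0 <= \sum_(m1 <= i < n1) f i by apply: sumr_ge0.
lra.
Qed.

Lemma fwd_bound m s : (1 <= m)%N -> (m < s)%N ->
  expR (- Sc) * \prod_(m.+1 <= i < s.+1) rh i <= Pd m s ord0 ord0 /\
  Pd m s ord0 ord0 <= expR Sc * \prod_(m.+1 <= i < s.+1) rh i.
Proof.
move=> m1 ms.
have [h _] := fwd_prod (s - m) m1.
rewrite (_ : (m + (s - m))%N = s) in h; last by lia.
have -> : \prod_(m.+1 <= i < s.+1) rh i = \prod_(0 <= i < s - m) rh (m.+1 + i).
  rewrite -{1}(add0n m.+1) big_addn (_ : (s.+1 - m.+1 = s - m)%N); last by lia.
  by apply: eq_big_nat => i _; rewrite addnC.
rewrite h; apply: prod_cmp.
  by move=> j _; split; [apply: rf_gt0 | apply: rho_gt0; lia].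
have := fwd_err (s - m).-1 m1.
by rewrite (_ : ((s - m).-1.+1 = s - m)%N) //; lia.
Qed.

Lemma bwd_bound m J n : (1 <= m)%N -> (m < J)%N -> (J <= n)%N ->
  expR (- Sc) * \prod_(m.+1 <= i < J.+1) (rh i)^-1 <=
    \prod_(m.+1 <= i < J.+1) zetakn q p1 p2 i n /\
  \prod_(m.+1 <= i < J.+1) zetakn q p1 p2 i n <=
    expR Sc * \prod_(m.+1 <= i < J.+1) (rh i)^-1.
Proof.
move=> m1 mJ Jn.
have -> : \prod_(m.+1 <= i < J.+1) zetakn q p1 p2 i n =
          \prod_(m.+1 <= i < J.+1) (rb n (n - i))^-1.
  by apply: eq_big_nat => i /andP[h1 h2]; rewrite zetakn_eq //; lia.
rewrite !prodfV.
have hsum : \sum_(m.+1 <= i < J.+1) `|ln (rb n (n - i)) - ln (rh i)| <= Sc.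
  apply: le_trans (@sub_sum (fun i => `|ln (rb n (n - i)) - ln (rh i)|) 2 m.+1 J.+1 n.+1
     ltac:(lia) ltac:(lia) ltac:(lia) (fun _ => normr_ge0 _)) _.
  have := bwd_err (n:=n) (N:=(n - 2)%N) ltac:(lia).
  apply: le_trans; rewrite le_eqVlt; apply/orP; left; apply/eqP.
  rewrite big_nat_rev (big_addn 0 n.+1 2).
  rewrite (_ : (n.+1 - 2 = (n - 2).+1)%N); last by lia.
  apply: eq_big_nat => i /andP[_ hi].
  rewrite (_ : (2 + n.+1 - (i + 2).+1)%N = (n - i)%N); last by lia.
  by rewrite (_ : (n - (n - i))%N = i) //; lia.
have pos : forall j, (m.+1 <= j < J.+1)%N -> 0 < rb n (n - j) /\ 0 < rh j.
  by move=> j /andP[j1 j2]; split; [apply: rb_gt0 | apply: rho_gt0]; lia.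
have [h1 h2] := @prod_cmp (fun i => rb n (n - i)) rh m.+1 J.+1 Sc pos hsum.
set P := \prod_(m.+1 <= i < J.+1) rh i in h1 h2 *.
set Q := \prod_(m.+1 <= i < J.+1) rb n (n - i) in h1 h2 *.
have P0 : 0 < P.
  by rewrite /P big_seq_cond; apply: prodr_gt0 => i /andP[]; rewrite mem_index_iota => hi _; apply: rho_gt0; lia.
have e0 := expR_gt0 Sc; have e1 := expR_gt0 (- Sc).
have Q0 : 0 < Q by apply: lt_le_trans h1; rewrite mulr_gt0.
split.
  by rewrite expRN -invfM lef_pV2 ?posrE ?mulr_gt0.
rewrite (_ : expR Sc = (expR (- Sc))^-1); last by rewrite expRN invrK.
by rewrite -invfM lef_pV2 ?posrE ?mulr_gt0.
Qed.

Lemma rb_cauchy n n' d : (n <= n')%N -> (d + 2 <= n)%N ->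
  `|ln (rb n d) - ln (rb n' (n' - n + d))| <= lam ^+ d * E1.
Proof.
move=> nn'; elim: d => [|d IH] h.
  by rewrite expr0 mul1r addn0; apply: lnd_le; apply: rb_in; lia.
rewrite addnS /=.
rewrite (_ : (n' - (n' - n + d).+1)%N = (n - d.+1)%N); last by lia.
have i2 : (2 <= n - d.+1)%N by lia.
apply: le_trans (contr hA0 (haA0 i2) (b_gt0 i2) (hbB1 i2) _ _) _.
- by case/andP: (rb_in (n:=n) (d:=d) ltac:(lia)).
- by case/andP: (rb_in (n:=n') (d:=(n' - n + d)%N) ltac:(lia)).
rewrite -/lam exprS -mulrA; apply: ler_wpM2l; first exact: lam_ge0.
apply: IH; lia.
Qed.

Lemma diff_ln x y : 0 < x -> x <= Rmax -> 0 < y -> y <= Rmax ->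
  `|x - y| <= Rmax * `|ln x - ln y|.
Proof.
wlog yx : x y / y <= x.
  move=> H x0 x1 y0 y1; case: (leP y x) => [/H|/ltW/H]; first exact.
  by move=> /(_ y0 y1 x0 x1); rewrite distrC (distrC (ln x)).
move=> x0 x1 y0 y1.
have lxy : ln y <= ln x by rewrite ler_ln ?posrE.
rewrite !ger0_norm ?subr_ge0 //.
have h : ln (1 + (y / x - 1)) <= y / x - 1.
  by apply: le_ln1Dx; rewrite ltrBrDr addrC subrr divr_gt0.
rewrite addrC subrK ln_div ?posrE // in h.
have h2 : x - y <= x * (ln x - ln y).
  have -> : x - y = x * (1 - y / x) by field; rewrite lt0r_neq0.
  by apply: ler_wpM2l; [apply: ltW | lra].
apply: le_trans h2 _; apply: ler_wpM2r => //; lra.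
Qed.



Lemma rbk_cvg k : (2 <= k)%N -> cvgn (fun n => rb n (n - k)).
Proof.
move=> k2; apply: cauchy_cvg; apply: cauchy_exP => e e0.
set C := Rmax * E1 + 1.
have C0 : 0 < C by rewrite /C ltr_pwDr // mulr_ge0 ?E1_ge0 // ltW // Rmax_gt0.
have lam1 : `|lam| < 1 by rewrite ger0_norm ?lam_ge0 ?lam_lt1.
have [M _ HM] : \forall n \near \oo, geometric 1 lam n < e / C.
  by apply: (cvgr_lt 0 (cvg_geometric 1 lam1)); rewrite divr_gt0.
exists (rb (k + M + 2) (k + M + 2 - k)); exists (k + M + 2)%N => // n /= Nn.
rewrite -ball_normE /=.
have h1 := rb_cauchy (n:=(k + M + 2)%N) (n':=n) (d:=(k + M + 2 - k)%N) Nn ltac:(lia).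
rewrite (_ : (n - (k + M + 2) + (k + M + 2 - k))%N = (n - k)%N) in h1; last by lia.
have hM : geometric 1 lam (k + M + 2 - k)%N < e / C by apply: HM => /=; lia.
rewrite /= mul1r in hM.
have [r1 r2] := andP (rb_in (n:=(k + M + 2)%N) (d:=(k + M + 2 - k)%N) ltac:(lia)).
have [r3 r4] := andP (rb_in (n:=n) (d:=(n - k)%N) ltac:(lia)).
apply: le_lt_trans (diff_ln _ r2 _ r4) _.
- exact: lt_le_trans hA0 r1.
- exact: lt_le_trans hA0 r3.
apply: le_lt_trans (ler_wpM2l (ltW Rmax_gt0) h1) _.
set t := lam ^+ _ in hM *.
have t0 : 0 <= t by rewrite exprn_ge0 // lam_ge0.
have : Rmax * (t * E1) <= C * t.
  have -> : Rmax * (t * E1) = Rmax * E1 * t by ring.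
  have -> : C * t = Rmax * E1 * t + t by rewrite /C; ring.
  by rewrite lerDl.
move: hM; rewrite ltr_pdivlMr // => hM.
rewrite mulrC in hM; lra.
Qed.

Lemma near_cvg (f g : nat -> R) (l : R) k : f @ \oo --> l ->
  (forall n, (k <= n)%N -> f n = g n) -> g @ \oo --> l.
Proof.
move=> H e; apply: cvg_trans H; apply: near_eq_cvg; exists k => // n /= kn.
Qed.

Lemma rbk_lim_ge k : (2 <= k)%N -> A0 <= limn (fun n => rb n (n - k)).
Proof.
move=> k2; apply: limr_ge; first exact: rbk_cvg.
exists (k + 2)%N => // n /= hn.
by case/andP: (rb_in (n:=n) (d:=(n - k)%N) ltac:(lia)).
Qed.

Lemma zeta_lim k : (2 <= k)%N ->
  zetakn q p1 p2 k @ \oo --> zeta q p1 p2 k.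
Proof.
move=> k2.
have hl : zetakn q p1 p2 k @ \oo --> (limn (fun n => rb n (n - k)))^-1.
  have ha := rbk_lim_ge k2.
  have H := cvgV (lt0r_neq0 (lt_le_trans hA0 ha)) (rbk_cvg k2).
  apply: (near_cvg (k:=k) (H _)) => n kn /=.
  by rewrite zetakn_eq.

by rewrite /zeta (cvg_lim _ hl).
Qed.

Lemma cvg_prod_range (F : nat -> nat -> R) (L : nat -> R) n0 n1 :
  (forall i, (n0 <= i < n1)%N -> F i @ \oo --> L i) ->
  (fun n => \prod_(n0 <= i < n1) F i n) @ \oo --> \prod_(n0 <= i < n1) L i.
Proof.
elim: n1 => [|n1 IH] h.
  rewrite big_geq //; apply: (near_cvg (k:=0) (f:=fun _ => 1)); first exact: cvg_cst.
  by move=> n _; rewrite big_geq.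
case: (leqP n0 n1) => n01; last first.
  rewrite big_geq //; apply: (near_cvg (k:=0) (f:=fun _ => 1)); first exact: cvg_cst.
  by move=> n _; rewrite big_geq.
rewrite big_nat_recr //=.
have H1 : (fun n => \prod_(n0 <= i < n1) F i n) @ \oo --> \prod_(n0 <= i < n1) L i.
  by apply: IH => i /andP[i1 i2]; apply: h; rewrite i1 /= ltnS ltnW.
have H2 : F n1 @ \oo --> L n1 by apply: h; rewrite n01 /=.
apply: (near_cvg (k:=0) (cvgM H1 H2)) => n _ /=.
by rewrite big_nat_recr.
Qed.

Definition Zp (m j : nat) := \prod_(m.+1 <= i < j.+1) zeta q p1 p2 i.
Definition Yp (m j : nat) := \prod_(m.+1 <= i < j.+1) (rh i)^-1.
Definition Xp (m j : nat) := \prod_(m.+1 <= i < j.+1) rh i.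

Lemma Xp_gt0 m j : (1 <= m)%N -> 0 < Xp m j.
Proof.
move=> m1; rewrite /Xp big_seq_cond; apply: prodr_gt0 => i /andP[].
by rewrite mem_index_iota => hi _; apply: rho_gt0; lia.
Qed.

Lemma Yp_gt0 m j : (1 <= m)%N -> 0 < Yp m j.
Proof.
move=> m1; rewrite /Yp big_seq_cond; apply: prodr_gt0 => i /andP[].
by rewrite mem_index_iota => hi _; rewrite invr_gt0; apply: rho_gt0; lia.
Qed.

Lemma zeta_bound m J : (1 <= m)%N -> (m < J)%N ->
  expR (- Sc) * Yp m J <= Zp m J /\ Zp m J <= expR Sc * Yp m J.
Proof.
move=> m1 mJ.
have H : (fun n => \prod_(m.+1 <= i < J.+1) zetakn q p1 p2 i n) @ \oo --> Zp m J.
  by apply: cvg_prod_range => i /andP[i1 _]; apply: zeta_lim; lia.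
have HL : limn (fun n => \prod_(m.+1 <= i < J.+1) zetakn q p1 p2 i n) = Zp m J.
  exact: cvg_lim H.
split.
  rewrite -HL; apply: limr_ge; first by apply/cvg_ex; exists (Zp m J).
  by exists J => // n /= Jn; case: (bwd_bound m1 mJ Jn).
rewrite -HL; apply: limr_le; first by apply/cvg_ex; exists (Zp m J).
by exists J => // n /= Jn; case: (bwd_bound m1 mJ Jn).
Qed.

Lemma Zp_ge0 m J : (1 <= m)%N -> 0 <= Zp m J.
Proof.
move=> m1; case: (leqP J m) => Jm.
  by rewrite /Zp big_geq ?ler01 //; lia.
have [h _] := zeta_bound m1 Jm; apply: le_trans h.
by rewrite mulr_ge0 // ?ltW ?expR_gt0 ?Yp_gt0.
Qed.

Lemma psum_mono (g : nat -> R) n0 : (forall j, (n0 <= j)%N -> 0 <= g j) ->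
  forall n n', (n <= n')%N -> \sum_(n0 <= j < n) g j <= \sum_(n0 <= j < n') g j.
Proof.
move=> g0 n n' nn'.
have pos : forall x : nat, 0 <= \sum_(n0 <= j < x) g j.
  by move=> x; rewrite big_seq_cond; apply: sumr_ge0 => j /andP[]; rewrite mem_index_iota => /andP[h _] _; apply: g0.
case: (leqP n n0) => nn0.
  by rewrite big_geq // (pos n').
rewrite (@big_cat_nat _ _ _ n n0 n' _ _ (ltnW nn0) nn') /= lerDl.
rewrite big_seq_cond; apply: sumr_ge0 => j /andP[]; rewrite mem_index_iota => /andP[h _] _.
by apply: g0; lia.
Qed.

Lemma ndE (h : nat -> R) : (forall n n', (n <= n')%N -> h n <= h n') ->
  cvgn (fun n => (h n)%:E).
Proof.
by move=> hm; apply: ereal_nondecreasing_is_cvgn => n n' nn'; rewrite lee_fin hm.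
Qed.

Lemma L1 (g : nat -> R) n0 : (forall j, (n0 <= j)%N -> 0 <= g j) ->
  (1 + \sum_(n0 <= j <oo) (g j)%:E)%E = limn (fun n => (1 + \sum_(n0 <= j < n) g j)%:E).
Proof.
move=> g0.
have -> : (fun n => (1 + \sum_(n0 <= j < n) g j)%:E) =
   (fun _ => 1%E) \+ (fun n => \sum_(n0 <= j < n) (g j)%:E)%E.
  by apply: funext => n /=; rewrite EFinD sumEFin.
rewrite limeD.
- by rewrite lim_cst.
- exact: is_cvg_cst.
- by apply: is_cvg_nneseries_cond => j hj _; rewrite lee_fin g0.
- by rewrite lim_cst // fin_num_adde_defr.
Qed.

Lemma fin_cmp (f g : nat -> R) n0 n lo hi :
  (forall j, (n0 <= j)%N -> 0 <= g j) ->
  (forall j, (n0 <= j)%N -> lo * g j <= f j /\ f j <= hi * g j) ->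
  0 <= lo -> lo <= 1 -> 1 <= hi ->
  lo * (1 + \sum_(n0 <= j < n) g j) <= 1 + \sum_(n0 <= j < n) f j /\
  1 + \sum_(n0 <= j < n) f j <= hi * (1 + \sum_(n0 <= j < n) g j).
Proof.
move=> g0 hfg lo0 lo1 hi1.
have s1 : lo * \sum_(n0 <= j < n) g j <= \sum_(n0 <= j < n) f j.
  rewrite mulr_sumr; apply: ler_sum_nat => j /andP[h _]; by case: (hfg j h).
have s2 : \sum_(n0 <= j < n) f j <= hi * \sum_(n0 <= j < n) g j.
  rewrite mulr_sumr; apply: ler_sum_nat => j /andP[h _]; by case: (hfg j h).
rewrite !mulrDr !mulr1; split; lra.
Qed.

Lemma lim_cmp (f g : nat -> R) n0 lo hi :
  (forall j, (n0 <= j)%N -> 0 <= f j) ->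
  (forall j, (n0 <= j)%N -> 0 <= g j) ->
  (forall j, (n0 <= j)%N -> lo * g j <= f j /\ f j <= hi * g j) ->
  0 <= lo -> lo <= 1 -> 1 <= hi ->
  (lo%:E * (1 + \sum_(n0 <= j <oo) (g j)%:E) <=
     limn (fun n => (1 + \sum_(n0 <= j < n) f j)%:E))%E /\
  (limn (fun n => (1 + \sum_(n0 <= j < n) f j)%:E) <=
     hi%:E * (1 + \sum_(n0 <= j <oo) (g j)%:E))%E.
Proof.
move=> f0 g0 hfg lo0 lo1 hi1.
have mg := psum_mono g0; have mf := psum_mono f0.
have cG : cvgn (fun n => (1 + \sum_(n0 <= j < n) g j)%:E).
  by apply: ndE => n n' nn'; rewrite lerD2l mg.
have cF : cvgn (fun n => (1 + \sum_(n0 <= j < n) f j)%:E).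
  by apply: ndE => n n' nn'; rewrite lerD2l mf.
rewrite (L1 g0).
have hi0 : 0 <= hi by apply: le_trans hi1; rewrite ler01.
split.
  rewrite -limeMl //; apply: lee_lim.
  - by apply: (@is_cvgeMl _ _ _ _ _ _ cG).
  - exact: cF.
  - near=> n; rewrite -EFinM lee_fin.
    by case: (fin_cmp n g0 hfg lo0 lo1 hi1) => //.
rewrite -limeMl //; apply: lee_lim.
- exact: cF.
- by apply: (@is_cvgeMl _ _ _ _ _ _ cG).
- near=> n; rewrite -EFinM lee_fin.
  by case: (fin_cmp n g0 hfg lo0 lo1 hi1) => //.
Unshelve. all: by end_near.
Qed.

Lemma main_bounds : exists c7 c8 : R, 0 < c7 /\ c7 < c8 /\
    forall m n, (1 <= m)%N -> (m < n)%N ->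
      ((c7%:E * DX q p1 p2 m <= FX q p1 p2 m)%E /\
       (FX q p1 p2 m <= c8%:E * DX q p1 p2 m)%E) /\
      ((c7%:E * DY q p1 p2 m <= FY q p1 p2 m)%E /\
       (FY q p1 p2 m <= c8%:E * DY q p1 p2 m)%E) /\
      (c7 * DYmn q p1 p2 m n <= FYmn q p1 p2 m n /\
       FYmn q p1 p2 m n <= c8 * DYmn q p1 p2 m n).
Proof.
have e1 : expR (- Sc) <= 1.
  by rewrite -expR0 ler_expR oppr_le0 Sc_ge0.
have e2 : 1 <= expR Sc by rewrite -expR0 ler_expR Sc_ge0.
have e0 := expR_gt0 (- Sc).
have e3 := expR_gt0 Sc.
exists (expR (- Sc)), (expR Sc + 1); split => //; split; first lra.
move=> m n m1 mn.
have lo0 : 0 <= expR (- Sc) by apply: ltW.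
have hi1 : 1 <= expR Sc + 1 by lra.
have hX : forall j, (m.+1 <= j)%N ->
    expR (- Sc) * Xp m j <= Pd m j ord0 ord0 /\ Pd m j ord0 ord0 <= (expR Sc + 1) * Xp m j.
  move=> j hj; have [h1 h2] := fwd_bound m1 hj; split => //.
  apply: le_trans h2 _; apply: ler_wpM2r; [exact: ltW (Xp_gt0 _ m1) | lra].
have fX0 : forall j, (m.+1 <= j)%N -> 0 <= Pd m j ord0 ord0.
  move=> j hj; have [h1 _] := hX j hj; apply: le_trans h1.
  by rewrite mulr_ge0 // ltW // Xp_gt0.
have gX0 : forall j, (m.+1 <= j)%N -> 0 <= Xp m j by move=> j _; apply: ltW; apply: Xp_gt0.
have [X1 X2] := lim_cmp fX0 gX0 hX lo0 e1 hi1.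
have hY : forall j, (m.+1 <= j)%N ->
    expR (- Sc) * Yp m j <= Zp m j /\ Zp m j <= (expR Sc + 1) * Yp m j.
  move=> j hj; have [h1 h2] := zeta_bound m1 hj; split => //.
  apply: le_trans h2 _; apply: ler_wpM2r; [exact: ltW (Yp_gt0 _ m1) | lra].
have fY0 : forall j, (m.+1 <= j)%N -> 0 <= Zp m j by move=> j _; apply: Zp_ge0.
have gY0 : forall j, (m.+1 <= j)%N -> 0 <= Yp m j by move=> j _; apply: ltW; apply: Yp_gt0.
have [Y1 Y2] := lim_cmp fY0 gY0 hY lo0 e1 hi1.
have [F1 F2] := fin_cmp n gY0 hY lo0 e1 hi1.
by split; [split | split].
Qed.

End Main.

Section Mono.
Variable R : realType.

Lemma D_shift (f : nat -> R) p : (1 <= p)%N -> (forall k, (2 <= k)%N -> 0 < f k) ->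
  (\sum_(p.+1 <= j <oo) (\prod_(p.+1 <= i < j.+1) f i)%:E =
   \sum_(0 <= j <oo) (\prod_(0 <= t < j.+1) f (t + p.+1)%N)%:E)%E.
Proof.
move=> p1 fpos.
rewrite -nneseries_addn; last first.
  move=> i; rewrite lee_fin big_seq_cond; apply: prodr_ge0 => t /andP[].
  by rewrite mem_index_iota => /andP[ht _] _; apply: ltW; apply: fpos; lia.
apply: eq_eseriesr => j _; congr (_%:E).
rewrite (big_addn 0 _ p.+1) (_ : ((j + p.+1).+1 - p.+1 = j.+1)%N) //; lia.
Qed.

Lemma D_mono (f : nat -> R) n n' : (1 <= n)%N -> (1 <= n')%N ->
  (forall k, (2 <= k)%N -> 0 < f k) ->
  (forall t, f (t + n.+1)%N <= f (t + n'.+1)%N) ->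
  ((1 + \sum_(n.+1 <= j <oo) (\prod_(n.+1 <= i < j.+1) f i)%:E) <=
   (1 + \sum_(n'.+1 <= j <oo) (\prod_(n'.+1 <= i < j.+1) f i)%:E))%E.
Proof.
move=> n1 nn' fpos hle.
rewrite (D_shift n1 fpos) (D_shift nn' fpos).
apply: leeD2l; apply: lee_nneseries.
  move=> i _ _; rewrite lee_fin big_seq_cond; apply: prodr_ge0 => t _.
  by apply: ltW; apply: fpos; lia.
move=> j _; rewrite lee_fin; apply: ler_prod => t _.
by rewrite ltW ?fpos ?hle //; lia.
Qed.

End Mono.

Unset Implicit Arguments.

Theorem lemma6 (R : realType) (q p1 p2 : nat -> R) (a b : R) (N0 : nat)
  (hq : forall k, (2 <= k)%N -> 0 < q k)
  (hp1 : forall k, (2 <= k)%N -> 0 <= p1 k)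
  (hp2 : forall k, (2 <= k)%N -> 0 < p2 k)
  (hsum : forall k, (2 <= k)%N -> q k + p1 k + p2 k = 1)
  (ha : 0 < a) (hb : 0 < b)
  (hak : ak q p1 p2 @ \oo --> a)
  (hbk : bk q p1 p2 @ \oo --> b)
  (hmono : (forall k l, (2 <= k)%N -> (N0 <= k)%N -> (k <= l)%N ->
              rho q p1 p2 k <= rho q p1 p2 l) \/
           (forall k l, (2 <= k)%N -> (N0 <= k)%N -> (k <= l)%N ->
              rho q p1 p2 l <= rho q p1 p2 k)) :
  ((forall n n', (1 <= n)%N -> (N0 < n)%N -> (n <= n')%N ->
       (DX q p1 p2 n <= DX q p1 p2 n')%E) \/
   (forall n n', (1 <= n)%N -> (N0 < n)%N -> (n <= n')%N ->
       (DX q p1 p2 n' <= DX q p1 p2 n)%E)) /\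
  ((forall n n', (1 <= n)%N -> (N0 < n)%N -> (n <= n')%N ->
       (DY q p1 p2 n <= DY q p1 p2 n')%E) \/
   (forall n n', (1 <= n)%N -> (N0 < n)%N -> (n <= n')%N ->
       (DY q p1 p2 n' <= DY q p1 p2 n)%E)) /\
  exists c7 c8 : R, 0 < c7 /\ c7 < c8 /\
    forall m n, (1 <= m)%N -> (m < n)%N ->
      ((c7%:E * DX q p1 p2 m <= FX q p1 p2 m)%E /\
       (FX q p1 p2 m <= c8%:E * DX q p1 p2 m)%E) /\
      ((c7%:E * DY q p1 p2 m <= FY q p1 p2 m)%E /\
       (FY q p1 p2 m <= c8%:E * DY q p1 p2 m)%E) /\
      (c7 * DYmn q p1 p2 m n <= FYmn q p1 p2 m n /\
       FYmn q p1 p2 m n <= c8 * DYmn q p1 p2 m n).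
Proof.
have apos := a_gt0 hq hp1 hp2.
have bpos := b_gt0 p1 hq hp2.
have rpos := rho_gt0 hq hp1 hp2.
have [A0 [hA0 haA0]] := cvg_lb ha hak apos.
have [A1 haA1] := cvg_ub hak.
have [B1 hbB1] := cvg_ub hbk.
have rinv : forall k, (2 <= k)%N -> 0 < (rho q p1 p2 k)^-1.
  by move=> k k2; rewrite invr_gt0 rpos.
split; last split.
- case: hmono => hm; [left | right] => n n' n1 Nn nn'; rewrite /DX.
    apply: D_mono => //; try lia; move=> t; apply: hm; lia.
  apply: D_mono => //; try lia; move=> t; apply: hm; lia.
- case: hmono => hm; [right | left] => n n' n1 Nn nn'; rewrite /DY.
    apply: (D_mono (f := fun k => (rho q p1 p2 k)^-1)) => //; try lia; move=> t.
    by rewrite lef_pV2 ?posrE ?rpos ?hm //; lia.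
  apply: (D_mono (f := fun k => (rho q p1 p2 k)^-1)) => //; try lia; move=> t.
  by rewrite lef_pV2 ?posrE ?rpos ?hm //; lia.
case: hmono => hm.
  apply: (@main_bounds R q p1 p2 hq hp1 hp2 A0 A1 B1 hA0 haA0 (fun k _ => haA1 k)
     (fun k _ => hbB1 k) 1 N0 (or_introl erefl)).
  move=> k l k2 kN kl; rewrite !mul1r ler_ln ?posrE ?rpos ?hm //; lia.
apply: (@main_bounds R q p1 p2 hq hp1 hp2 A0 A1 B1 hA0 haA0 (fun k _ => haA1 k)
   (fun k _ => hbB1 k) (-1) N0 (or_intror erefl)).
move=> k l k2 kN kl; rewrite !mulN1r lerN2 ler_ln ?posrE ?rpos ?hm //; lia.
Qed.
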